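(* Let $\mathbf{x}$ be a $d$-dimensional random vector that is a mixture of two $\sigma$-sub-gaussian random vectors $\mathbf{x}_1,\mathbf{x}_2$ with overlapping supports and mixture proportion $\alpha\in[0,1]$, i.e. its density is $p(\mathbf{x})=\alpha p_1(\mathbf{x})+(1-\alpha)p_2(\mathbf{x})$. Let $\boldsymbol{v}$ satisfy $\|\boldsymbol{v}\|_2=1$ and suppose the Jensen–Shannon divergence satisfies $\mathrm{JS}(\boldsymbol{v}^\top\mathbf{x}_1\,\|\,\boldsymbol{v}^\top\mathbf{x}_2)\le\beta$. Then the differential entropy $H(\boldsymbol{v}^\top\mathbf{x})$ is at most $\mathcal{O}(\log\sigma+\beta)$. *)

(* Defs.v *)
From HB Require Import structures.
From mathcomp Require Import all_boot all_order all_algebra.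
From mathcomp Require Import all_classical all_reals all_analysis.
Set Implicit Arguments. Unset Strict Implicit. Unset Printing Implicit Defensive.
Import Order.TTheory GRing.Theory Num.Theory.
Import numFieldNormedType.Exports.
Local Open Scope classical_set_scope.
Local Open Scope ring_scope.

Section Defs.
Context {R : realType}.
Local Notation leb := (@lebesgue_measure R).

Definition unit_vec (d : nat) (u : 'rV[R]_d) : Prop :=
  Num.sqrt (\sum_(j < d) u ord0 j ^+ 2) = 1.

(* A d-dimensional random vector is given by its d real coordinates. *)
Definition vproj {dT} {T : measurableType dT} (d : nat) (u : 'rV[R]_d)
  (X : 'I_d -> T -> R) : T -> R :=
  fun t => \sum_(j < d) u ord0 j * X j t.

Definition measurable_vec {dT} {T : measurableType dT} (d : nat)
  (X : 'I_d -> T -> R) : Prop := forall j, measurable_fun setT (X j).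

Definition subgaussian {dT} {T : measurableType dT} (P : probability T R)
  (d : nat) (X : 'I_d -> T -> R) (sigma : R) : Prop :=
  0 < sigma /\
  forall u : 'rV[R]_d, unit_vec u ->
    P.-integrable setT (EFin \o vproj u X) /\
    forall lam : R,
      (\int[P]_t (expR (lam * (vproj u X t
                  - fine (\int[P]_s (vproj u X s)%:E))))%:E
       <= (expR (lam ^+ 2 * sigma ^+ 2 / 2))%:E)%E.

Definition is_density {dT} {T : measurableType dT} (P : probability T R)
  (Y : T -> R) (f : R -> R) : Prop :=
  (forall x, 0 <= f x) /\ measurable_fun setT f /\
  forall B : set R, measurable B ->
    P (Y @^-1` B) = (\int[leb]_(x in B) (f x)%:E)%E.

(* differential entropy of a density f : H = - int f ln f  (0 ln 0 = 0) *)
Definition diff_entropy (f : R -> R) : \bar R :=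
  (- \int[leb]_x (f x * ln (f x))%:E)%E.

Definition KL (f g : R -> R) : \bar R :=
  (\int[leb]_x (f x * ln (f x / g x))%:E)%E.

Definition JS (f g : R -> R) : \bar R :=
  let m := (fun x => (f x + g x) / 2)%R in
  ((2^-1)%:E * KL f m + (2^-1)%:E * KL g m)%E.

Definition supports_overlap (f g : R -> R) : Prop :=
  (0 < leb ([set x | (0 < f x)%R] `&` [set x | (0 < g x)%R]))%E.

End Defs.

(* Main.v *)
Require Import Defs.
From HB Require Import structures.
From mathcomp Require Import all_boot all_order all_algebra.
From mathcomp Require Import all_classical all_reals all_analysis.
From mathcomp Require Import measurable_realfun ring lra.
Import Order.TTheory GRing.Theory Num.Theory.
Import numFieldNormedType.Exports.
Local Open Scope classical_set_scope.
Local Open Scope ring_scope.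

Section cov.
Local Open Scope ereal_scope.
Context d (T : measurableType d) (R : realType).
Variables (nu mu : {measure set T -> \bar R}) (g : T -> R).
Hypothesis g0 : forall x, (0 <= g x)%R.
Hypothesis mg : measurable_fun setT g.
Hypothesis gint : forall A, measurable A -> nu A = \int[mu]_(x in A) (g x)%:E.

Import HBNNSimple.

Lemma my_change_of_variables (f : T -> \bar R) E : (forall x, 0 <= f x) ->
    measurable E -> measurable_fun E f ->
  \int[mu]_(x in E) (f x * (g x)%:E) = \int[nu]_(x in E) f x.
Proof.
move=> f0 mE mf; set G := fun x => (g x)%:E.
have mG : measurable_fun setT G by exact/measurable_EFinP.
pose h := nnsfun_approx mE mf.
have -> : \int[nu]_(x in E) f x =
    lim (\int[nu]_(x in E) (EFin \o h n) x @[n --> \oo]).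
  have fE x : E x -> f x = lim ((EFin \o h n) x @[n --> \oo]).
    by move=> Ex; apply/esym/cvg_lim => //; exact: cvg_nnsfun_approx.
  under eq_integral => x /[!inE] /fE -> //.
  apply: monotone_convergence => //.
  - move=> n; apply/measurable_EFinP.
    by apply: (measurable_funS measurableT) => //; exact/measurable_funP.
  - by move=> n x Ex //=; rewrite lee_fin.
  - by move=> x Ex a b ab; rewrite lee_fin; exact/lefP/nd_nnsfun_approx.
have -> : \int[mu]_(x in E) (f x * G x) =
    lim (\int[mu]_(x in E) ((EFin \o h n) x * G x) @[n --> \oo]).
  have fg x : E x -> f x * G x = lim (((EFin \o h n) \* G) x @[n --> \oo]).
    by move=> Ex; apply/esym/cvg_lim => //; apply: cvgeZr;
      [by []|exact: cvg_nnsfun_approx].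
  under eq_integral => x /[!inE] /fg -> //.
  apply: monotone_convergence => [//| | |].
  - move=> n; apply/emeasurable_funM; apply/measurable_funTS.
      exact/measurable_EFinP.
    exact: mG.
  - by move=> n x Ex /=; rewrite mule_ge0 ?lee_fin.
  - by move=> x Ex a b ab/=; rewrite lee_wpmul2r ?lee_fin//; exact/lefP/nd_nnsfun_approx.
suff suf n : \int[mu]_(x in E) ((EFin \o h n) x * G x) =
    \int[nu]_(x in E) (EFin \o h n) x.
  by under eq_fun do rewrite suf.
transitivity (\int[nu]_(x in E)
   (\sum_(y \in range (h n)) (y * \1_(h n @^-1` [set y]) x)%:E)); last first.
  by apply: eq_integral => t tE; rewrite /= fimfunE -fsumEFin.
have indich m r : measurable_fun E (fun x => (r * \1_(h m @^-1` [set r]) x)%:E).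
  by apply: (measurable_comp measurableT) => //; exact: measurable_funM.
rewrite ge0_integral_fsum//; last by move=> m y Ey; exact: nnfun_muleindic_ge0.
transitivity (\int[mu]_(x in E) (\sum_(y \in range (h n))
    (y * \1_(h n @^-1` [set y]) x)%:E * G x)).
  under [RHS]eq_integral => x xE.
    rewrite -ge0_mule_fsuml => [|y]; last exact: nnfun_muleindic_ge0.
    rewrite fsumEFin // -(fimfunE _ x); over.
  by [].
rewrite ge0_integral_fsum//; last 2 first.
  - move=> y; apply: emeasurable_funM => //; apply: measurable_funTS.
    exact: mG.
  - by move=> m y Ey; apply: mule_ge0; [exact: nnfun_muleindic_ge0|rewrite lee_fin].
apply: eq_fsbigr => r rhn.
under [RHS]eq_integral do rewrite EFinM.
rewrite integralZl_indic_nnsfun => //.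
under eq_integral do rewrite EFinM -muleA.
rewrite ge0_integralZl//.
- under eq_integral do rewrite muleC.
  rewrite (eq_integral (G \_ (h n @^-1` [set r]))); last first.
    by move=> x xE; rewrite epatch_indic.
  by rewrite -integral_mkcondr -gint// integral_indic// setIC.
- apply: emeasurable_funM; first exact/measurable_EFinP.
  exact/measurable_funTS/mG.
- by move=> t Et; rewrite mule_ge0 ?lee_fin.
- by move: rhn; rewrite inE => -[t _ <-]; rewrite lee_fin.
Qed.
End cov.

Lemma le_integral_gen d (T : measurableType d) (R : realType)
  (mu : {measure set T -> \bar R}) (D : set T) (F h : T -> \bar R) :
  measurable D -> measurable_fun D F -> measurable_fun D h ->
  (forall x, D x -> (h x <= F x)%E) ->
  (\int[mu]_(x in D) h x <= \int[mu]_(x in D) F x)%E.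
Proof.
move=> mD mF mh hF; rewrite (integralE mu D h) (integralE mu D F).
apply: leeB.
  apply: (@ge0_le_integral _ _ _ mu D mD _ _ (fun x _ => funepos_ge0 h x) (measurable_funepos mh) (measurable_funepos mF)).
  by move=> x Dx; apply: (funepos_le (D:=D)); [move=> y /[!inE] yD; exact: hF|rewrite inE].
apply: (@ge0_le_integral _ _ _ mu D mD _ _ (fun x _ => funeneg_ge0 F x) (measurable_funeneg mF) (measurable_funeneg mh)).
by move=> x Dx; apply: (funeneg_le (D:=D)); [move=> y /[!inE] yD; exact: hF|rewrite inE].
Qed.

Lemma ln_le_sub1 (R : realType) (x : R) : 0 < x -> ln x <= x - 1.
Proof.
move=> x0; have := @le_ln1Dx R (x - 1); rewrite addrCA subrr addr0; apply; lra.
Qed.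

Lemma pw (R : realType) (f g c p : R) : 0 <= f -> 0 < g -> c - p <= ln g ->
  (c + 1) * f - f * p - g <= f * ln f.
Proof.
move=> f0 g0 hg; have [->|fp] := eqVneq f 0.
  rewrite mulr0 !mul0r subr0 sub0r oppr_le0; exact: ltW.
have fgt : 0 < f by rewrite lt_def fp f0.
have h1 := @ln_le_sub1 R _ (divr_gt0 g0 fgt).
rewrite lnM ?posrE ?invr_gt0// lnV ?posrE// in h1.
have h2 : f * (ln g - ln f) <= g - f.
  have := ler_wpM2l f0 h1.
  have -> : f * (g / f - 1) = g - f by rewrite mulrBr mulr1 mulrCA divff ?mulr1.
  by [].
have h3 : f * (c - p) <= f * ln g by exact: ler_wpM2l.
move: h2 h3; rewrite !mulrBr => h2 h3.
lra.
Qed.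

Lemma sq_le_exp (R : realType) (z : R) : z ^+ 2 / 2 <= expR z + expR (- z).
Proof.
have h1 := @expR_ge1Dxn R `|z| 1 (normr_ge0 z).
have h3 : expR `|z| <= expR z + expR (- z).
  case: (lerP 0 z) => hz.
    by rewrite ger0_norm// lerDl expR_ge0.
  by rewrite ltr0_norm// lerDr expR_ge0.
have h4 : z ^+ 2 = `|z| ^+ 2 by rewrite real_normK// num_real.
rewrite h4; apply: le_trans h3; apply: le_trans h1.
by rewrite lerDr.
Qed.

Definition packY d (T : measurableType d) (R : realType) (Y : T -> R)
  (mY : measurable_fun setT Y) : {mfun T >-> measurableTypeR R} :=
  HB.pack (Y : T -> measurableTypeR R) (@isMeasurableFun.Build _ _ T (measurableTypeR R) Y mY).
Arguments packY {d T R} Y mY.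

Lemma q_bound d (T : measurableType d) (R : realType) (P : probability T R)
  (Y : T -> R) (mY : measurable_fun setT Y) (s m : R) : 0 < s ->
  (forall lam : R, (\int[P]_t (expR (lam * (Y t - m)))%:E
       <= (expR (lam ^+ 2 * s ^+ 2 / 2))%:E)%E) ->
  (\int[distribution P (packY Y mY)]_y ((y - m) ^+ 2 / (s ^+ 2 *+ 2))%:E
     <= (expR (2^-1) *+ 2)%:E)%E.
Proof.
move=> s0 hmgf.
rewrite ge0_integral_pushforward //=; last 2 first.
- apply/measurable_EFinP; apply: measurable_funM => //.
  exact: measurable_funX (measurable_funB _ _).
- by move=> y _; rewrite lee_fin divr_ge0// ?sqr_ge0// mulrn_wge0// sqr_ge0.
rewrite preimage_setT.
have mz : forall k : R, measurable_fun setT (fun t => expR (k * (Y t - m))).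
  move=> k; apply: measurableT_comp => //; apply: measurable_funM => //.
  exact: measurable_funB.
apply: (@le_trans _ _ (\int[P]_t ((expR (s^-1 * (Y t - m)))%:E + (expR (- s^-1 * (Y t - m)))%:E))%E).
  apply: ge0_le_integral => //.
  - by move=> t _; rewrite lee_fin divr_ge0// ?sqr_ge0// mulrn_wge0// sqr_ge0.
  - apply/measurable_EFinP; apply: measurable_funM => //.
    exact: measurable_funX (measurable_funB _ _).
  - by apply: emeasurable_funD; apply/measurable_EFinP; exact: mz.
  - move=> t _; rewrite -EFinD lee_fin /=.
    have := @sq_le_exp R (s^-1 * (Y t - m)).
    have -> : (s^-1 * (Y t - m)) ^+ 2 / 2 = (Y t - m) ^+ 2 / (s ^+ 2 *+ 2).
      rewrite -mulr_natr; field; lra.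
    by rewrite mulNr.
rewrite ge0_integralD//; try (by move=> t _; rewrite lee_fin expR_ge0);
  try (by apply/measurable_EFinP; exact: mz).
have e : forall lam, lam ^+ 2 = s^-2 -> lam ^+ 2 * s ^+ 2 / 2 = 2^-1.
  by move=> lam ->; field; lra.
rewrite mulr2n EFinD; apply: leeD.
  by apply: le_trans (hmgf _) _; rewrite e// exprVn.
by apply: le_trans (hmgf _) _; rewrite e// sqrrN exprVn.
Qed.

Section core.
Context (R : realType).
Local Notation leb := (@lebesgue_measure R).
Variables (s m1 m2 a Bnd : R) (nu1 nu2 : probability (measurableTypeR R) R) (f : R -> R).
Hypothesis s0 : 0 < s.
Hypothesis a0 : 0 <= a.
Hypothesis a1 : a <= 1.
Hypothesis f0 : forall x, 0 <= f x.
Hypothesis mf : measurable_fun setT f.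
Hypothesis hmix : forall A, measurable A ->
  (a%:E * nu1 A + (1 - a)%:E * nu2 A)%E = (\int[leb]_(x in A) (f x)%:E)%E.
Let q m y := (y - m) ^+ 2 / (s ^+ 2 *+ 2).
Hypothesis hb1 : (\int[nu1]_y (q m1 y)%:E <= Bnd%:E)%E.
Hypothesis hb2 : (\int[nu2]_y (q m2 y)%:E <= Bnd%:E)%E.

Let c := ln (normal_peak s / 2).
Let g y := (normal_pdf m1 s y + normal_pdf m2 s y) / 2.
Let psi y := Num.min (q m1 y) (q m2 y).

Let sn0 : s != 0. Proof. by rewrite gt_eqF. Qed.

Let Npos m y : 0 < normal_pdf m s y.
Proof. by rewrite normal_pdfE// mulr_gt0 ?expR_gt0// normal_peak_gt0. Qed.

Let gpos y : 0 < g y.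
Proof. by rewrite /g divr_gt0// addr_gt0. Qed.

Let lnN m y : ln (normal_pdf m s y / 2) = c - q m y.
Proof.
rewrite normal_pdfE// /normal_fun mulrAC lnM ?posrE ?expR_gt0 ?divr_gt0 ?normal_peak_gt0//.
by rewrite expRK /c /q mulNr.
Qed.

Let lng y : c - psi y <= ln (g y).
Proof.
have h1 : c - q m1 y <= ln (g y).
  rewrite -lnN ler_ln ?posrE ?divr_gt0 ?addr_gt0// /g.
  by rewrite ler_pdivlMr// divfK// lerDl ltW.
have h2 : c - q m2 y <= ln (g y).
  rewrite -lnN ler_ln ?posrE ?divr_gt0 ?addr_gt0// /g.
  by rewrite ler_pdivlMr// divfK// lerDr ltW.
rewrite /psi; case: (lerP (q m1 y) (q m2 y)) => h; by [].
Qed.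

Let mq m : measurable_fun setT (q m).
Proof.
apply: measurable_funM => //.
exact: measurable_funX (measurable_funB _ _).
Qed.

Let mpsi : measurable_fun setT psi.
Proof. exact: measurable_minr. Qed.

Let psi0 y : 0 <= psi y.
Proof. by rewrite /psi /q le_min !divr_ge0 ?sqr_ge0 ?mulrn_wge0 ?sqr_ge0. Qed.

Lemma core : ((c - Bnd)%:E <= \int[leb]_x (f x * ln (f x))%:E)%E.
Proof.
have mg : measurable_fun setT g.
  apply: measurable_funM => //; apply: measurable_funD; exact: measurable_normal_pdf.
have If : (\int[leb]_x (f x)%:E = 1)%E.
  rewrite -hmix// !probability_setT !mule1 -EFinD; congr (_%:E); ring.
have intf : leb.-integrable setT (EFin \o f).
  apply/integrableP; split; first exact/measurable_EFinP.
  under eq_integral do rewrite /= ger0_norm//.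
  by rewrite If ltry.
have intN m : leb.-integrable setT (fun x => (normal_pdf m s x)%:E).
  exact: integrable_normal_pdf.
have Ig : (\int[leb]_x (g x)%:E = 1)%E.
  under eq_integral do rewrite /g mulrC EFinM EFinD.
  rewrite integralZl//; last exact: integrableD.
  rewrite integralD// !integral_normal_pdf -EFinD -EFinM; congr (_%:E); by field.
have intg : leb.-integrable setT (EFin \o g).
  apply/integrableP; split; first exact/measurable_EFinP.
  under eq_integral do rewrite /= ger0_norm ?ltW//.
  by rewrite Ig ltry.
have b0 : 0 <= 1 - a by rewrite subr_ge0.
pose mix := measure_add (mscale (NngNum a0) nu1) (mscale (NngNum b0) nu2).
have hmixm : forall A, measurable A -> mix A = (\int[leb]_(x in A) (f x)%:E)%E.
  by move=> A mA; rewrite /mix measure_addE /mscale /=; exact: hmix.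
have mpsiE : measurable_fun setT (fun x => (psi x)%:E) by exact/measurable_EFinP.
have Ifpsi : (\int[leb]_x (f x * psi x)%:E = \int[mix]_x (psi x)%:E)%E.
  rewrite -(@my_change_of_variables _ (measurableTypeR R) _ mix leb f f0 mf hmixm (fun x => (psi x)%:E) setT).
  - by apply: eq_integral => x _; rewrite -EFinM mulrC.
  - by move=> x; rewrite lee_fin.
  - exact: measurableT.
  - exact: mpsiE.
have Jb : (\int[mix]_x (psi x)%:E <= Bnd%:E)%E.
  rewrite ge0_integral_measure_add//; last by move=> x _; rewrite lee_fin.
  rewrite !ge0_integral_mscale//; try by move=> x _; rewrite lee_fin.
  have A1 : (\int[nu1]_x (psi x)%:E <= Bnd%:E)%E.
    { apply: le_trans hb1; apply: ge0_le_integral => //.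
    all: try (by move=> x _; rewrite lee_fin).
    all: try (by apply/measurable_EFinP).
    all: try (by apply/measurable_EFinP; exact: mq).
    all: by move=> x _; rewrite lee_fin /psi ge_min lexx ?orbT. }
  have A2 : (\int[nu2]_x (psi x)%:E <= Bnd%:E)%E.
    { apply: le_trans hb2; apply: ge0_le_integral => //.
    all: try (by move=> x _; rewrite lee_fin).
    all: try (by apply/measurable_EFinP).
    all: try (by apply/measurable_EFinP; exact: mq).
    all: by move=> x _; rewrite lee_fin /psi ge_min lexx ?orbT. }
  apply: le_trans (leeD (lee_wpmul2l _ A1) (lee_wpmul2l _ A2)) _; try by rewrite lee_fin.
  by rewrite /= -!EFinM -EFinD; have -> : a * Bnd + (1 - a) * Bnd = Bnd by ring.
have J0 : (0 <= \int[mix]_x (psi x)%:E)%E.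
  by apply: integral_ge0 => x _; rewrite lee_fin.
have intfpsi : leb.-integrable setT (fun x => (f x * psi x)%:E).
  apply/integrableP; split.
    by apply/measurable_EFinP; exact: measurable_funM.
  under eq_integral do rewrite /= ger0_norm ?mulr_ge0//.
  by rewrite Ifpsi (le_lt_trans Jb) ?ltry.
apply: (@le_trans _ _ (\int[leb]_x ((c + 1)%:E * (f x)%:E - ((f x * psi x)%:E + (g x)%:E)))%E).
  rewrite integralB//; last 2 first.
  - exact: integrableZl.
  - exact: integrableD.
  rewrite integralZl// integralD// If Ifpsi Ig mule1.
  have Jf : (\int[mix]_x (psi x)%:E)%E \is a fin_num.
    by rewrite ge0_fin_numE// (le_lt_trans Jb) ?ltry.
  rewrite -(fineK Jf) -EFinD lee_fin.
  have : fine (\int[mix]_x (psi x)%:E)%E <= Bnd.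
    by rewrite -lee_fin fineK.
  lra.
apply: le_integral_gen => //.
- apply/measurable_EFinP; apply: measurable_funM => //.
  apply: measurableT_comp; [exact: measurable_ln|exact: mf].
- apply: emeasurable_funB.
    by apply: emeasurable_funM => //; exact/measurable_EFinP.
  apply: emeasurable_funD; apply/measurable_EFinP => //.
  exact: measurable_funM.
- move=> x _; rewrite -EFinM -EFinD lee_fin opprD addrA.
  exact: (@pw R).
Qed.
End core.

Lemma KL_mid (R : realType) (f g : R -> R) :
  (forall x, 0 <= f x) -> (forall x, 0 <= g x) ->
  measurable_fun setT f -> measurable_fun setT g ->
  (\int[lebesgue_measure]_x (f x)%:E = 1)%E ->
  (\int[lebesgue_measure]_x (g x)%:E = 1)%E ->
  (0 <= KL f (fun x => ((f x + g x) / 2)%R))%E.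
Proof.
move=> f0 g0 mf mg If Ig; rewrite /KL.
set m := fun x => (f x + g x) / 2.
have m0 x : 0 <= m x by rewrite /m divr_ge0 ?addr_ge0.
have e x : f x * ln (f x / m x) = f x * (ln (f x) - ln (m x)).
  have [->|fn] := eqVneq (f x) 0; first by rewrite !mul0r.
  have fp : 0 < f x by rewrite lt_def fn f0.
  have mp : 0 < m x by rewrite /m divr_gt0// ltr_wpDr.
  by rewrite lnM ?posrE ?invr_gt0// lnV ?posrE.
under eq_integral do rewrite e.
have intf : (@lebesgue_measure R).-integrable setT (EFin \o f).
  apply/integrableP; split; first exact/measurable_EFinP.
  under eq_integral do rewrite /= ger0_norm//.
  by rewrite If ltry.
have intg : (@lebesgue_measure R).-integrable setT (EFin \o g).
  apply/integrableP; split; first exact/measurable_EFinP.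
  under eq_integral do rewrite /= ger0_norm//.
  by rewrite Ig ltry.
have mm : measurable_fun setT m.
  by apply: measurable_funM => //; apply: measurable_funD.
have intm : (@lebesgue_measure R).-integrable setT (EFin \o m).
  apply/integrableP; split; first exact/measurable_EFinP.
  under eq_integral do rewrite /= ger0_norm//.
  under eq_integral do rewrite /m mulrC EFinM EFinD.
  rewrite integralZl//; last exact: integrableD.
  by rewrite integralD// If Ig -EFinD -EFinM ltry.
have Im : (\int[lebesgue_measure]_x (m x)%:E = 1)%E.
  under eq_integral do rewrite /m mulrC EFinM EFinD.
  rewrite integralZl//; last exact: integrableD.
  rewrite integralD// If Ig -EFinD -EFinM; congr (_%:E); by field.
apply: (@le_trans _ _ (\int[lebesgue_measure]_x ((f x)%:E - (m x)%:E))%E).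
  by rewrite integralB_EFin// If Im subee.
apply: le_integral_gen => //.
- apply/measurable_EFinP; apply: measurable_funM => //.
  apply: measurable_funB; apply: measurableT_comp; by [exact: measurable_ln|].
- by apply: emeasurable_funB; apply/measurable_EFinP.
- move=> x _; rewrite -EFinB lee_fin.
  have [->|fn] := eqVneq (f x) 0.
    by rewrite mul0r sub0r oppr_le0.
  have fp : 0 < f x by rewrite lt_def fn f0.
  have mp : 0 < m x by rewrite /m divr_gt0// ltr_wpDr.
  have := @pw R (f x) (m x) (ln (m x)) 0 (f0 x) mp.
  rewrite subr0 lexx => /(_ isT).
  rewrite mulr0 subr0 mulrBr; lra.
Qed.

Theorem mainTheorem5 (R : realType) :
  exists C1 C2 : R, 0 < C2 /\
  forall (dT : measure_display) (T : measurableType dT) (P : probability T R)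
    (d : nat) (x x1 x2 : 'I_d -> T -> R) (sigma alpha beta : R)
    (v : 'rV[R]_d) (f1 f2 : R -> R),
    measurable_vec x -> measurable_vec x1 -> measurable_vec x2 ->
    subgaussian P x1 sigma -> subgaussian P x2 sigma ->
    0 <= alpha <= 1 ->
    (forall (u : 'rV[R]_d) (B : set R), measurable B ->
       P (vproj u x @^-1` B) =
       (alpha%:E * P (vproj u x1 @^-1` B)
        + (1 - alpha)%:E * P (vproj u x2 @^-1` B))%E) ->
    unit_vec v ->
    is_density P (vproj v x1) f1 -> is_density P (vproj v x2) f2 ->
    supports_overlap f1 f2 ->
    (JS f1 f2 <= beta%:E)%E ->
    forall f : R -> R, is_density P (vproj v x) f ->
      (diff_entropy f <= (C1 + C2 * (ln sigma + beta))%:E)%E.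
Proof.
exists (expR (2^-1) *+ 2 + ln (2 * Num.sqrt (pi *+ 2))), 1; split => //.
move=> dT T P d x x1 x2 sigma alpha beta v f1 f2 mx mx1 mx2 hs1 hs2
  /andP[a0 a1] hlaw hv hd1 hd2 _ hJS f hd.
have s0 : 0 < sigma := hs1.1.
have mY (X : 'I_d -> T -> R) : measurable_vec X -> measurable_fun setT (vproj v X).
  move=> mX; rewrite /vproj; apply: (measurable_sum (index_enum _)) => j.
  exact: measurable_funM (mX j).
set m1 := fine (\int[P]_s (vproj v x1 s)%:E)%E.
set m2 := fine (\int[P]_s (vproj v x2 s)%:E)%E.
have hmgf1 := (hs1.2 v hv).2.
have hmgf2 := (hs2.2 v hv).2.
pose nu1 := distribution P (packY (vproj v x1) (mY _ mx1)).
pose nu2 := distribution P (packY (vproj v x2) (mY _ mx2)).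
have hb1 := @q_bound _ _ _ P _ (mY _ mx1) sigma m1 s0 hmgf1.
have hb2 := @q_bound _ _ _ P _ (mY _ mx2) sigma m2 s0 hmgf2.
have hmix : forall A, measurable A ->
  (alpha%:E * nu1 A + (1 - alpha)%:E * nu2 A)%E =
  (\int[lebesgue_measure]_(y in A) (f y)%:E)%E.
  move=> A mA; rewrite /nu1 /nu2 /distribution /pushforward /=.
  by rewrite -(hlaw v A mA) (hd.2.2 A mA).
have Hc := @core R sigma m1 m2 alpha (expR (2^-1) *+ 2) nu1 nu2 f s0 a0 a1
  hd.1 hd.2.1 hmix hb1 hb2.
have I1 : (\int[lebesgue_measure]_y (f1 y)%:E = 1)%E.
  by rewrite -(hd1.2.2 setT measurableT) preimage_setT probability_setT.
have I2 : (\int[lebesgue_measure]_y (f2 y)%:E = 1)%E.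
  by rewrite -(hd2.2.2 setT measurableT) preimage_setT probability_setT.
have JS0 : (0 <= JS f1 f2)%E.
  rewrite /JS; apply: adde_ge0; apply: mule_ge0; rewrite ?lee_fin ?invr_ge0//.
    exact: KL_mid hd1.1 hd2.1 hd1.2.1 hd2.2.1 I1 I2.
  have -> : (fun y => ((f1 y + f2 y) / 2)%R) = (fun y => ((f2 y + f1 y) / 2)%R).
    by apply/funext => y; rewrite addrC.
  exact: KL_mid hd2.1 hd1.1 hd2.2.1 hd1.2.1 I2 I1.
have b0 : 0 <= beta by rewrite -lee_fin (le_trans JS0 hJS).
have sp : 0 < Num.sqrt (pi *+ 2 : R) by rewrite sqrtr_gt0 pmulrn_lgt0// pi_gt0.
have hc : ln (normal_peak sigma / 2) = - (ln sigma + ln (2 * Num.sqrt (pi *+ 2))).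
  have e1 : Num.sqrt (sigma ^+ 2 * pi *+ 2) = sigma * Num.sqrt (pi *+ 2).
    by rewrite -mulrnAr sqrtrM ?sqr_ge0// sqrtr_sqr ger0_norm// ltW.
  have e2 : normal_peak sigma / 2 = (sigma * (2 * Num.sqrt (pi *+ 2)))^-1.
    rewrite /normal_peak e1; field.
    by rewrite gt_eqF// gt_eqF.
  rewrite e2 lnV ?posrE ?mulr_gt0// lnM ?posrE ?mulr_gt0//.
rewrite /diff_entropy.
apply: le_trans (_ : (- (ln (normal_peak sigma / 2) - expR (2^-1) *+ 2)%:E <= _)%E).
  by rewrite leeN2.
rewrite lee_fin hc mul1r; lra.
Qed.
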